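(* Let $a=a_0+a_1e_1+a_2e_2+a_3e_3\in C\ell_2\setminus\mathbb{R}$. Then there exists $u\in C\ell_2\setminus Z(C\ell_2)$ such that $$u^{-1}au=\begin{cases} a_0+\sqrt{G(a)}\,e_2, & G(a)>0;\\ a_0+\sqrt{-G(a)}\,e_3, & G(a)<0;\\ a_0+e_2+e_3, & G(a)=0.\end{cases}$$
   Context: $C\ell_2$ is the 4-dimensional real associative algebra with basis $1,e_1,e_2,e_3$ and multiplication $e_1^2=e_2^2=1$, $e_3^2=-1$, $e_1e_2=e_3=-e_2e_1$, $e_1e_3=e_2=-e_3e_1$, $e_3e_2=e_1=-e_2e_3$; $\mathbb{R}$ is identified with $\mathbb{R}\cdot1$. For $a=a_0+a_1e_1+a_2e_2+a_3e_3$: $G(a)=a_1^2+a_2^2-a_3^2$, $H_a=a_0^2-a_1^2-a_2^2+a_3^2$; $Z(C\ell_2)=\{a:H_a=0\}$, and elements outside $Z(C\ell_2)$ are invertible. *)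

(* Defs.v *)
From Stdlib Require Import Reals.
Open Scope R_scope.

(* a = c0 + c1 e1 + c2 e2 + c3 e3 *)
Record Cl2 := mkCl2 { c0 : R; c1 : R; c2 : R; c3 : R }.

(* Multiplication from e1^2=e2^2=1, e3^2=-1, e1e2=e3=-e2e1,
   e1e3=e2=-e3e1, e3e2=e1=-e2e3. *)
Definition cmul (a b : Cl2) : Cl2 :=
  mkCl2 (c0 a * c0 b + c1 a * c1 b + c2 a * c2 b - c3 a * c3 b)
        (c0 a * c1 b + c1 a * c0 b - c2 a * c3 b + c3 a * c2 b)
        (c0 a * c2 b + c2 a * c0 b + c1 a * c3 b - c3 a * c1 b)
        (c0 a * c3 b + c3 a * c0 b + c1 a * c2 b - c2 a * c1 b).

Definition cone : Cl2 := mkCl2 1 0 0 0.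
Definition creal (r : R) : Cl2 := mkCl2 r 0 0 0.

Definition G (a : Cl2) : R := c1 a ^ 2 + c2 a ^ 2 - c3 a ^ 2.
Definition H (a : Cl2) : R := c0 a ^ 2 - c1 a ^ 2 - c2 a ^ 2 + c3 a ^ 2.

(* membership in Z(Cl_2) = {a : H_a = 0} *)
Definition inZ (a : Cl2) : Prop := H a = 0.
Definition is_real (a : Cl2) : Prop := exists r : R, a = creal r.

Definition is_inverse (u v : Cl2) : Prop := cmul u v = cone /\ cmul v u = cone.

(* Main.v *)
Require Import Defs.
From Stdlib Require Import Reals Lra Psatz.
Open Scope R_scope.
Local Notation c1 := Defs.c1.
Local Notation c2 := Defs.c2.
Local Notation c3 := Defs.c3.
Local Notation c0 := Defs.c0.

Lemma cmul_assoc x y z : cmul (cmul x y) z = cmul x (cmul y z).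
Proof. destruct x, y, z; unfold cmul; simpl; f_equal; ring. Qed.

Lemma key u a b : H u <> 0 -> cmul a u = cmul u b ->
  exists uinv, is_inverse u uinv /\ cmul (cmul uinv a) u = b.
Proof.
  intros Hu E.
  set (ui := mkCl2 (c0 u / H u) (- c1 u / H u) (- c2 u / H u) (- c3 u / H u)).
  assert (I1 : cmul u ui = cone).
  { destruct u as [x y z w]; unfold ui, cmul, cone, H in *; simpl in *; f_equal; field; contradict Hu; lra. }
  assert (I2 : cmul ui u = cone).
  { destruct u as [x y z w]; unfold ui, cmul, cone, H in *; simpl in *; f_equal; field; contradict Hu; lra. }
  exists ui; split; [split; auto|].
  rewrite cmul_assoc, E, <- cmul_assoc, I2.
  destruct b; unfold cmul, cone; simpl; f_equal; ring.
Qed.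

Theorem lemma5p3 (a : Cl2) :
  ~ is_real a ->
  exists u uinv : Cl2,
    ~ inZ u /\ is_inverse u uinv /\
    cmul (cmul uinv a) u =
      (if Rlt_dec 0 (G a) then mkCl2 (c0 a) 0 (sqrt (G a)) 0
       else if Rlt_dec (G a) 0 then mkCl2 (c0 a) 0 0 (sqrt (- G a))
       else mkCl2 (c0 a) 0 1 1).
Proof.
  intros NR.
  assert (NZ : ~ (c1 a = 0 /\ c2 a = 0 /\ c3 a = 0)).
  { intros [h1 [h2 h3]]; apply NR; exists (c0 a); destruct a; simpl in *; subst; reflexivity. }
  destruct a as [a0 a1 a2 a3]; unfold G in *; cbn [Defs.c0 Defs.c1 Defs.c2 Defs.c3] in *.
  destruct (Rlt_dec 0 (a1 ^ 2 + a2 ^ 2 - a3 ^ 2)) as [Hp|Hp].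
  - set (s := sqrt (a1 ^ 2 + a2 ^ 2 - a3 ^ 2)).
    assert (Hs : s * s = a1 ^ 2 + a2 ^ 2 - a3 ^ 2) by (apply sqrt_sqrt; lra).
    assert (Hs0 : 0 < s) by (apply sqrt_lt_R0; lra).
    destruct (Req_dec a2 (- s)) as [E|E].
    + exists (cmul (mkCl2 0 a1 (a2 - s) a3) (mkCl2 0 1 0 0)).
      destruct (key (cmul (mkCl2 0 a1 (a2 - s) a3) (mkCl2 0 1 0 0)) (mkCl2 a0 a1 a2 a3)
                  (mkCl2 a0 0 s 0)) as [ui [I1 I2]].
      * unfold H, cmul; simpl. rewrite E; nra.
      * unfold cmul; simpl; f_equal; nra.
      * exists ui; repeat split; auto; try apply I1; try apply I2.
        unfold inZ, H, cmul; simpl. rewrite E; nra.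
    + exists (mkCl2 0 a1 (a2 + s) a3).
      destruct (key (mkCl2 0 a1 (a2 + s) a3) (mkCl2 a0 a1 a2 a3)
                  (mkCl2 a0 0 s 0)) as [ui [I1 I2]].
      * unfold H; simpl. intro C.
        assert (C2 : s * (s + a2) = 0) by nra.
        apply Rmult_integral in C2; destruct C2; lra.
      * unfold cmul; simpl; f_equal; nra.
      * exists ui; repeat split; auto; try apply I1; try apply I2.
        unfold inZ, H; simpl. intro C.
        assert (C2 : s * (s + a2) = 0) by nra.
        apply Rmult_integral in C2; destruct C2; lra.
  - destruct (Rlt_dec (a1 ^ 2 + a2 ^ 2 - a3 ^ 2) 0) as [Hn|Hn].
    + set (s := sqrt (- (a1 ^ 2 + a2 ^ 2 - a3 ^ 2))).
      assert (Hs : s * s = - (a1 ^ 2 + a2 ^ 2 - a3 ^ 2)) by (apply sqrt_sqrt; lra).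
      assert (Hs0 : 0 < s) by (apply sqrt_lt_R0; lra).
      destruct (Req_dec a3 (- s)) as [E|E].
      * exists (cmul (mkCl2 0 a1 a2 (a3 - s)) (mkCl2 0 1 0 0)).
        destruct (key (cmul (mkCl2 0 a1 a2 (a3 - s)) (mkCl2 0 1 0 0)) (mkCl2 a0 a1 a2 a3)
                    (mkCl2 a0 0 0 s)) as [ui [I1 I2]].
        -- unfold H, cmul; simpl. rewrite E; nra.
        -- unfold cmul; simpl; f_equal; nra.
        -- exists ui; repeat split; auto; try apply I1; try apply I2.
           unfold inZ, H, cmul; simpl. rewrite E; nra.
      * exists (mkCl2 0 a1 a2 (a3 + s)).
        destruct (key (mkCl2 0 a1 a2 (a3 + s)) (mkCl2 a0 a1 a2 a3)
                    (mkCl2 a0 0 0 s)) as [ui [I1 I2]].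
        -- unfold H; simpl. intro C.
           assert (C2 : s * (s + a3) = 0) by nra.
           apply Rmult_integral in C2; destruct C2; lra.
        -- unfold cmul; simpl; f_equal; nra.
        -- exists ui; repeat split; auto; try apply I1; try apply I2.
           unfold inZ, H; simpl. intro C.
           assert (C2 : s * (s + a3) = 0) by nra.
           apply Rmult_integral in C2; destruct C2; lra.
    + assert (G0 : a1 ^ 2 + a2 ^ 2 - a3 ^ 2 = 0) by lra.
      destruct (Req_dec a2 a3) as [E|E].
      * subst a3.
        assert (A1 : a1 = 0) by nra. subst a1.
        assert (A2 : a2 <> 0) by tauto.
        set (u := mkCl2 ((a2 + 1) / 2) ((a2 - 1) / 2) 0 0).
        exists u.
        destruct (key u (mkCl2 a0 0 a2 a2) (mkCl2 a0 0 1 1)) as [ui [I1 I2]].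
        -- unfold H, u; simpl. intro C. apply A2. nra.
        -- unfold cmul, u; simpl; f_equal; field.
        -- exists ui; repeat split; auto; try apply I1; try apply I2.
           unfold inZ, H, u; simpl. intro C. apply A2. nra.
      * exists (mkCl2 0 a1 (a2 + 1) (a3 + 1)).
        destruct (key (mkCl2 0 a1 (a2 + 1) (a3 + 1)) (mkCl2 a0 a1 a2 a3)
                    (mkCl2 a0 0 1 1)) as [ui [I1 I2]].
        -- unfold H; simpl. intro C. apply E. nra.
        -- unfold cmul; simpl; f_equal; nra.
        -- exists ui; repeat split; auto; try apply I1; try apply I2.
           unfold inZ, H; simpl. intro C. apply E. nra.
Qed.
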